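(* Every block graph is hereditarily connected-domishold. Every trivially perfect graph is hereditarily connected-domishold.
   Context: A block graph is a graph in which every block (maximal connected subgraph without a cut vertex) is a complete graph. A trivially perfect graph is a graph with no induced subgraph isomorphic to $P_4$ or $C_4$. A connected dominating set of a connected graph $G$ is a set $S\subseteq V(G)$ such that every vertex outside $S$ has a neighbor in $S$ and $G[S]$ is connected; $G$ is connected-domishold if there exist $w:V(G)\to\mathbb{R}_{\ge0}$, $t\in\mathbb{R}_{\ge0}$ with $\sum_{x\in S}w(x)\ge t$ iff $S$ is a connected dominating set, for all $S\subseteq V(G)$; disconnected graphs are connected-domishold by convention. $G$ is hereditarily connected-domishold if all its induced subgraphs are connected-domishold. *)

(* Defs.v *)
(* Finite simple graphs: a symmetric irreflexive relation
   e : rel T on a finite type T. Induced subgraphs G[U] are given by vertex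
   sets U : {set T}. *)
From HB Require Import structures.
From mathcomp Require Import all_boot all_order all_algebra.
Set Implicit Arguments. Unset Strict Implicit. Unset Printing Implicit Defensive.
Import Order.TTheory GRing.Theory Num.Theory.

Section Graphs.
Variables (T : finType) (e : rel T).

Definition adj_in (U : {set T}) : rel T :=
  [rel x y | [&& x \in U, y \in U & e x y]].

(* G[U] is connected: nonempty, and any two of its vertices are joined by a
   path of G[U]. (The null graph is regarded as not connected.) *)
Definition connected_in (U : {set T}) : bool :=
  (U != set0) && [forall x in U, forall y in U, connect (adj_in U) x y].

Definition cds_in (U S : {set T}) : bool :=
  [&& S \subset U,
      [forall x in U :\: S, exists y in S, e x y]
    & connected_in S].

Definition cut_vertex_in (B : {set T}) (v : T) : bool :=
  (v \in B) && [exists x in B :\ v, exists y in B :\ v,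
                  ~~ connect (adj_in (B :\ v)) x y].

Definition biconn (B : {set T}) : bool :=
  connected_in B && [forall v, ~~ cut_vertex_in B v].

(* blocks: maximal connected subgraphs without a cut vertex (maximal
   such subgraphs are always induced, so vertex sets suffice) *)
Definition is_block (B : {set T}) : bool := maxset biconn B.

Definition is_clique (B : {set T}) : bool :=
  [forall x in B, forall y in B, (x != y) ==> e x y].

Definition block_graph : bool := [forall B, is_block B ==> is_clique B].

Definition distinct4 (a b c d : T) : bool :=
  uniq [:: a; b; c; d].

Definition induced_P4 (a b c d : T) : bool :=
  [&& distinct4 a b c d, e a b, e b c, e c d, ~~ e a c, ~~ e b d & ~~ e a d].

Definition induced_C4 (a b c d : T) : bool :=
  [&& distinct4 a b c d, e a b, e b c, e c d, e d a, ~~ e a c & ~~ e b d].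

Definition trivially_perfect : Prop :=
  forall a b c d : T, ~~ induced_P4 a b c d /\ ~~ induced_C4 a b c d.

Local Open Scope ring_scope.

(* G[U] is connected-domishold (weights in a real field R); disconnected
   graphs are connected-domishold by convention *)
Definition connected_domishold (R : realFieldType) (U : {set T}) : Prop :=
  connected_in U ->
  exists (w : T -> R) (t : R),
    (forall x, 0 <= w x) /\ 0 <= t /\
    forall S : {set T}, S \subset U ->
      (t <= \sum_(x in S) w x) <-> cds_in U S.

Definition hereditarily_connected_domishold (R : realFieldType) : Prop :=
  forall U : {set T}, connected_domishold R U.

End Graphs.

(* Main.v *)
Require Import Defs.
From HB Require Import structures.
From mathcomp Require Import all_boot all_order all_algebra.
From mathcomp Require Import zify.
Set Implicit Arguments. Unset Strict Implicit. Unset Printing Implicit Defensive.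

Section Gen.
Variables (T : finType) (e : rel T).
Hypothesis esym : symmetric e.
Hypothesis eirr : irreflexive e.

Lemma adj_in_sym (A : {set T}) : symmetric (adj_in e A).
Proof.
move=> x y; rewrite /adj_in /= esym.
by case: (x \in A); case: (y \in A).
Qed.

Lemma adj_in_sub (A B : {set T}) : A \subset B -> subrel (adj_in e A) (adj_in e B).
Proof.
move=> sAB x y /= /and3P[xA yA exy].
by rewrite /adj_in /= (subsetP sAB _ xA) (subsetP sAB _ yA) exy.
Qed.

Lemma connect_mono (A B : {set T}) x y : A \subset B ->
  connect (adj_in e A) x y -> connect (adj_in e B) x y.
Proof.
move=> sAB; apply: connect_sub => u v huv; apply: connect1.
exact: adj_in_sub huv.
Qed.

Lemma connect_in (A : {set T}) x y : connect (adj_in e A) x y -> x \in A -> y \in A.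
Proof.
case/connectP=> p + ->; elim: p x => [|z p IH] x //=.
by case/andP => /and3P[_ zA _] pp _; exact: (IH z pp zA).
Qed.

Lemma csym (A : {set T}) x y : connect (adj_in e A) x y = connect (adj_in e A) y x.
Proof. by rewrite (sym_connect_sym (adj_in_sym A)). Qed.

Lemma path_conn (r : rel T) x p y : path r x p -> y \in x :: p -> connect r x y.
Proof.
elim: p x => [|z p IH] x /=.
  by move=> _; rewrite inE => /eqP ->.
case/andP=> rxz pp; rewrite inE => /orP[/eqP -> //|yin].
exact: connect_trans (connect1 rxz) (IH _ pp yin).
Qed.

Lemma path_restrict (r : rel T) (A : {set T}) x p : path r x p -> subrel r e ->
  {subset x :: p <= A} -> path (adj_in e A) x p.
Proof.
move=> + sre; elim: p x => [|z p IH] x //=.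
case/andP=> rxz pp sub; rewrite /adj_in /= (sub x) ?inE ?eqxx // (sub z) ?inE ?eqxx ?orbT //.
rewrite (sre _ _ rxz) /=; apply: IH => // y yin; apply: sub.
by rewrite inE yin orbT.
Qed.

Lemma path_tail_in (A : {set T}) x p : path (adj_in e A) x p -> {subset p <= A}.
Proof.
elim: p x => [|z p IH] x //= /andP[/and3P[_ zA _] pp] y.
by rewrite inE => /orP[/eqP ->//|]; apply: IH pp y.
Qed.

Lemma thr (R : realFieldType) (U : {set T}) (f : T -> nat) (m : nat) :
  (forall S : {set T}, S \subset U -> cds_in e U S = (m <= \sum_(x in S) f x)%N) ->
  connected_domishold e R U.
Proof.
move=> H _; exists (fun x => (f x)%:R%R), m%:R%R; split.
  by move=> x; exact: Num.Theory.ler0n.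
split; first exact: Num.Theory.ler0n.
by move=> S sSU; rewrite -GRing.natr_sum Num.Theory.ler_nat H.
Qed.

End Gen.

Section Block.
Variables (T : finType) (e : rel T).
Hypothesis esym : symmetric e.
Hypothesis eirr : irreflexive e.

Lemma seg (A : {set T}) x0 p v y :
  (forall z, z \in x0 :: p -> z != v -> z \in A) -> path e x0 p ->
  uniq (x0 :: p) -> y \in x0 :: p -> y != v ->
  connect (adj_in e A) y x0 \/ connect (adj_in e A) y (last x0 p).
Proof.
elim: p x0 => [|x1 p IH] x0 sub pp up yin yv.
  by left; move: yin; rewrite inE => /eqP ->.
move: pp => /= /andP[ex01 pp]; move: up => /= /andP[x0n up].
case: (eqVneq v x0) => [vx0|vx0].
  have yin' : y \in x1 :: p.
    by move: yin; rewrite inE -vx0 (negbTE yv).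
  have sub' : {subset x1 :: p <= A}.
    move=> z zin; apply: sub; first by rewrite inE zin orbT.
    by rewrite vx0; apply: contraNneq x0n => <-.
  have pA := path_restrict pp (fun x y (h : e x y) => h) sub'.
  right; apply: connect_trans (_ : connect _ y x1) _.
    by rewrite csym //; apply: path_conn pA yin'.
  exact: path_conn pA (mem_last _ _).
case: (eqVneq y x0) => [-> | yx0]; first by left; exact: connect0.
have yin' : y \in x1 :: p by move: yin; rewrite inE (negbTE yx0).
have sub' : forall z, z \in x1 :: p -> z != v -> z \in A.
  by move=> z zin; apply: sub; rewrite inE zin orbT.
case: (IH x1 sub' pp up yin' yv) => [h|h]; last by right.
have yA : y \in A by apply: sub.
have x1A := connect_in h yA.
left; apply: connect_trans h (connect1 _).
rewrite /adj_in /= x1A esym ex01 andbT.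
by apply: sub; rewrite ?inE ?eqxx // eq_sym.
Qed.

Definition Qprop := forall c a b, e c a -> e c b -> a != b -> ~~ e a b ->
  ~~ connect (adj_in e (~: [set c])) a b.

Lemma hub_all (A : {set T}) h :
  (forall x, x \in A -> connect (adj_in e A) x h) ->
  forall x y, x \in A -> y \in A -> connect (adj_in e A) x y.
Proof.
move=> H x y xA yA; apply: connect_trans (H _ xA) _.
by rewrite csym //; apply: H.
Qed.

Lemma block_Q : block_graph e -> Qprop.
Proof.
move=> bg c a b eca ecb nab neab; apply/negP => /connectP[p0 pp0 lastp].
case: (shortenP pp0) lastp => p pp up _ lastp.
have ac : a != c by apply: contraTneq eca => ->; rewrite eirr.
have cp : c \notin a :: p.
  rewrite inE negb_or eq_sym ac /=; apply/negP => /(path_tail_in pp).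
  by rewrite !inE eqxx.
have pe : path e a p by apply: sub_path pp => x y /and3P[].
pose B := c |: [set x in a :: p].
have inB x : (x \in B) = (x == c) || (x \in a :: p) by rewrite !inE.
have aB : a \in B by rewrite inB inE eqxx orbT.
have bB : b \in B by rewrite inB lastp mem_last orbT.
have cB : c \in B by rewrite inB eqxx.
have eac : e a c by rewrite esym.
have ebc : e b c by rewrite esym.
have conn_v v : forall x y, x \in B :\ v -> y \in B :\ v ->
    connect (adj_in e (B :\ v)) x y.
  apply: (@hub_all _ (if v == c then a else c)) => x.
  rewrite in_setD1 => /andP[xv xB].
  case: (eqVneq v c) => [vc | vc].
    subst v.
    have xin : x \in a :: p by move: xB; rewrite inB (negbTE xv).
    have pA : path (adj_in e (B :\ c)) a p.
      apply: path_restrict pe (fun x y (h : e x y) => h) _ => z zin.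
      rewrite in_setD1 inB zin orbT andbT.
      by apply: contraNneq cp => <-.
    by rewrite csym //; apply: path_conn pA xin.
  case: (eqVneq x c) => [-> | xc]; first exact: connect0.
  have xin : x \in a :: p by move: xB; rewrite inB (negbTE xc).
  have sub z : z \in a :: p -> z != v -> z \in B :\ v.
    by move=> zin zv; rewrite in_setD1 zv inB zin orbT.
  have xA : x \in B :\ v by rewrite in_setD1 xv.
  have cA : c \in B :\ v by rewrite in_setD1 eq_sym vc.
  case: (seg sub pe up xin xv) => h.
    have aA := connect_in h xA.
    by apply: connect_trans h (connect1 _); rewrite /adj_in /= aA cA eac.
  have bA := connect_in h xA.
  by apply: connect_trans h (connect1 _); rewrite /adj_in /= bA cA -lastp ebc.
have bcB : biconn e B.
  apply/andP; split.
    apply/andP; split; first by apply/set0Pn; exists c.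
    apply/forall_inP => x xB; apply/forall_inP => y yB.
    apply: (@hub_all _ c) => // z zB.
    case: (eqVneq z c) => [-> | zc]; first exact: connect0.
    have zin : z \in a :: p by move: zB; rewrite inB (negbTE zc).
    have pA : path (adj_in e B) a p.
      apply: path_restrict pe (fun x y (h : e x y) => h) _ => w win.
      by rewrite inB win orbT.
    apply: connect_trans (_ : connect _ z a) (connect1 _).
      by rewrite csym //; apply: path_conn pA zin.
    by rewrite /adj_in /= aB cB eac.
  apply/forallP => v; rewrite /cut_vertex_in negb_and; apply/orP; right.
  rewrite negb_exists; apply/forallP => x; rewrite negb_and negb_exists.
  apply/orP; case: (boolP (x \in B :\ v)) => xA; [right|by left].
  apply/forallP => y; rewrite negb_and negbK.
  apply/orP; case: (boolP (y \in B :\ v)) => yA; [right|by left].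
  exact: conn_v.
case: (maxset_exists bcB) => B' maxB' sBB'.
have := forallP bg B'; rewrite /is_block maxB' /= => /forall_inP cl.
have := cl a (subsetP sBB' _ aB) => /forall_inP /(_ b (subsetP sBB' _ bB)).
by rewrite nab (negbTE neab).
Qed.

End Block.

Section QC.
Variables (T : finType) (e : rel T).
Hypothesis esym : symmetric e.
Hypothesis eirr : irreflexive e.
Hypothesis Q : Qprop e.

Lemma Q_cds (U S : {set T}) : connected_in e U -> S \subset U ->
  cds_in e U S = ([set c | cut_vertex_in e U c] \subset S) && (S != set0).
Proof.
move=> cU sSU; apply/idP/idP.
  case/and3P => _ dom /andP[Sne Sconn]; rewrite Sne andbT.
  apply/subsetP => c; rewrite inE => /andP[cU' /existsP[x /andP[xA /existsP[y /andP[yA nc]]]]].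
  apply/negPn/negP => cS; apply: (negP nc).
  have sSA : S \subset U :\ c.
    apply/subsetP => z zS; rewrite in_setD1 (subsetP sSU _ zS) andbT.
    by apply: contraNneq cS => <-.
  have toS z : z \in U :\ c -> exists2 s, s \in S & connect (adj_in e (U :\ c)) z s.
    move=> zA; case: (boolP (z \in S)) => zS; first by exists z => //; exact: connect0.
    have zUS : z \in U :\: S by rewrite inE zS; move: zA; rewrite in_setD1 => /andP[].
    have /exists_inP[s sS ezs] := forall_inP dom z zUS.
    exists s => //; apply: connect1; rewrite /adj_in /= zA ezs andbT.
    exact: (subsetP sSA).
  have [sx sxS hx] := toS x xA; have [sy syS hy] := toS y yA.
  apply: connect_trans hx _; apply: connect_trans (_ : connect _ sx sy) _.
    apply: connect_mono sSA _.
    by have /forall_inP/(_ _ sxS)/forall_inP/(_ _ syS) := Sconn.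
  by rewrite csym.
case/andP => KS Sne.
have key s x : s \in S -> connect (adj_in e U) s x ->
   (x \in S /\ connect (adj_in e S) s x) \/
   (x \notin S /\ exists2 s', s' \in S & e x s' && connect (adj_in e S) s s').
  move=> sS /connectP[p + ->]; elim/last_ind: p => [|p y IH] /=.
    by left; split => //; exact: connect0.
  rewrite rcons_path last_rcons => /andP[pp /and3P[zU yU ezy]].
  case: (IH pp) => [[zS hz] | [zS [s' s'S /andP[eys' hs']]]].
    case: (boolP (y \in S)) => yS.
      left; split => //; apply: connect_trans hz (connect1 _).
      by rewrite /adj_in /= zS yS ezy.
    by right; split => //; exists (last s p) => //; rewrite esym ezy.
  have s'U := subsetP sSU _ s'S.
  case: (eqVneq y s') => [ys' | ys'].
    by left; rewrite ys'; split.
  case: (boolP (e y s')) => eys.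
    case: (boolP (y \in S)) => yS.
      left; split => //; apply: connect_trans hs' (connect1 _).
      by rewrite /adj_in /= s'S yS esym eys.
    by right; split => //; exists s' => //; rewrite eys.
  have s'z : s' != last s p by apply: contraNneq zS => <-.
  exfalso; move/negP: zS; apply.
  apply: (subsetP KS); rewrite inE /cut_vertex_in zU /=.
  apply/existsP; exists y; rewrite in_setD1 yU andbT.
  have yz : y != last s p by apply: contraTneq ezy => ->; rewrite eirr.
  rewrite yz /=; apply/existsP; exists s'; rewrite in_setD1 s'U andbT.
  rewrite s'z /=; apply: contraNN (Q ezy eys' ys' eys).
  apply: connect_mono; apply/subsetP => w; rewrite in_setD1 !inE.
  by case/andP.
rewrite /cds_in sSU /=; have [s0 s0S] := set0Pn _ Sne.
apply/andP; split.
  apply/forall_inP => x; rewrite inE => /andP[xS xU].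
  have s0U := subsetP sSU _ s0S.
  have := forall_inP (forall_inP (proj2 (andP cU)) _ s0U) _ xU.
  case/(key _ _ s0S) => [[xS' _]|[_ [s' s'S /andP[ex _]]]].
    by rewrite xS' in xS.
  by apply/exists_inP; exists s'.
rewrite /connected_in Sne /=; apply/forall_inP => x xS; apply/forall_inP => y yS.
have := forall_inP (forall_inP (proj2 (andP cU)) _ (subsetP sSU _ xS)) _ (subsetP sSU _ yS).
by case/(key _ _ xS) => [[_ h] | [yS' _]]; last by rewrite yS in yS'.
Qed.

End QC.

Section TP.
Variables (T : finType) (e : rel T).
Hypothesis esym : symmetric e.
Hypothesis eirr : irreflexive e.
Hypothesis tp : trivially_perfect e.

Definition nbh (W : {set T}) x := [set y in W | e x y].

Lemma deg_step (W : {set T}) u s z : u \in W -> s \in W -> z \in W ->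
  e s u -> e z s -> ~~ e z u -> z != u ->
  (nbh W u :\ s \subset nbh W s) /\ #|nbh W u| < #|nbh W s|.
Proof.
move=> uW sW zW esu ezs nezu zu.
have sub : nbh W u :\ s \subset nbh W s.
  apply/subsetP => y; rewrite in_setD1 !inE => /and3P[ys yW euy].
  rewrite yW /=; apply/negPn/negP => nesy.
  have [hP hC] := tp z s u y.
  have zs : z != s by apply: contraTneq ezs => ->; rewrite eirr.
  have su : s != u by apply: contraTneq esu => ->; rewrite eirr.
  have uy : u != y by apply: contraTneq euy => ->; rewrite eirr.
  have zy : z != y by apply: contraNneq nezu => ->; rewrite esym.
  have d4 : distinct4 z s u y.
    by rewrite /distinct4 /= !inE !negb_or zs zu zy su uy eq_sym ys.
  case: (boolP (e y z)) => eyz.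
    by move: hC; rewrite /induced_C4 d4 ezs esu euy eyz nezu nesy.
  by move: hP; rewrite /induced_P4 d4 ezs esu euy nezu nesy esym eyz.
split => //.
have sin : s \in nbh W u by rewrite inE sW esym esu.
have uin : u \in nbh W s by rewrite inE uW esu.
have sub2 : nbh W u :\ s \proper nbh W s :\ u.
  apply/properP; split.
    apply/subsetP => y yin; rewrite in_setD1 (subsetP sub _ yin) andbT.
    by apply/eqP => yu; move: yin; rewrite yu !inE eirr !andbF.
  exists z.
    by rewrite in_setD1 zu inE zW esym ezs.
  by rewrite in_setD1 inE esym (negbTE nezu) !andbF.
have := proper_card sub2.
by rewrite (cardsD1 s (nbh W u)) (cardsD1 u (nbh W s)) sin uin.
Qed.

Definition univ (W : {set T}) u := [forall y in W, (y != u) ==> e u y].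

Lemma exit_edge (r : rel T) (N : pred T) v p : path r v p -> N v ->
  ~~ N (last v p) -> exists x y, [/\ r x y, N x & ~~ N y].
Proof.
elim: p v => [|z p IH] v /=; first by move=> _ ->.
case/andP => rvz pp Nv; case: (boolP (N z)) => Nz.
  exact: IH pp Nz.
by move=> _; exists v, z.
Qed.

Lemma exists_univ (W : {set T}) : connected_in e W -> exists2 u, u \in W & univ W u.
Proof.
case/andP => /set0Pn[w0 w0W] cW.
case: (@arg_maxnP _ w0 (mem W) (fun i => #|nbh W i|) w0W) => /= v vW vmax.
exists v; first exact: vW. rewrite /univ; apply/forall_inP => w wW; apply/implyP => wv.
apply/negPn/negP => nevw.
have /forall_inP/(_ v vW)/forall_inP/(_ w wW)/connectP[p pp lp] := cW.
pose N := [pred y | (y == v) || e v y].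
have [x [y [axy Nx Ny]]] : exists x y, [/\ adj_in e W x y, N x & ~~ N y].
  apply: (exit_edge pp); first by rewrite /N /= eqxx.
  by rewrite -lp /N /= negb_or wv.
move: axy => /and3P[xW yW exy].
have xv : x != v by apply: contraNneq Ny => xv; rewrite /N /= -xv exy orbT.
have evx : e v x by move: Nx; rewrite /N /= (negbTE xv).
move: Ny; rewrite /N /= negb_or => /andP[yv nevy].
have exv : e x v by rewrite esym.
have eyx : e y x by rewrite esym.
have neyv : ~~ e y v by rewrite esym.
have [_ lt] := deg_step vW xW yW exv eyx neyv yv.
by have := vmax x xW; rewrite leqNgt lt.
Qed.

Lemma TP_cds (U S : {set T}) : S \subset U ->
  cds_in e U S = (S :&: [set u in U | univ U u] != set0).
Proof.
move=> sSU; apply/idP/idP.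
  case/and3P => _ dom cS.
  have [u0 u0S u0univ] := exists_univ cS.
  case: (@arg_maxnP _ u0 [pred i | (i \in S) && univ S i] (fun i => #|nbh U i|));
    first by rewrite /= u0S.
  move=> /= u /andP[uS uunivS] umax.
  apply/set0Pn; exists u; rewrite !inE uS (subsetP sSU _ uS) /=.
  rewrite /univ; apply/forall_inP => z zU; apply/implyP => zu; apply/negPn/negP => neuz.
  have zS : z \notin S.
    apply: contraNN neuz => zS.
    by move: (forall_inP uunivS z zS); rewrite zu.
  have zUS : z \in U :\: S by rewrite inE zS.
  have /forall_inP/(_ z zUS)/exists_inP[s sS ezs] := dom.
  have esu : e s u.
    have su : s != u by apply: contraTneq ezs => ->; rewrite esym.
    by move: (forall_inP uunivS s sS); rewrite su esym.
  have nezu : ~~ e z u by rewrite esym.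
  have [sub lt] := deg_step (subsetP sSU _ uS) (subsetP sSU _ sS) zU esu ezs nezu zu.
  have sunivS : univ S s.
    rewrite /univ; apply/forall_inP => y yS; apply/implyP => ys.
    case: (eqVneq y u) => [-> | yu]; first by [].
    have : y \in nbh U u :\ s.
      rewrite in_setD1 ys inE (subsetP sSU _ yS) /=.
      by move: (forall_inP uunivS y yS); rewrite yu.
    by move/(subsetP sub); rewrite inE => /andP[].
  by have := umax s; rewrite /= sS sunivS => /(_ isT); rewrite leqNgt lt.
case/set0Pn => u; rewrite !inE => /and3P[uS uU uuniv].
rewrite /cds_in sSU /=; apply/andP; split.
  apply/forall_inP => x; rewrite inE => /andP[xS xU]; apply/exists_inP.
  exists u => //; rewrite esym.
  have xu : x != u by apply: contraNneq xS => ->.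
  by move: (forall_inP uuniv x xU); rewrite xu.
apply/andP; split; first by apply/set0Pn; exists u.
apply/forall_inP => x xS; apply/forall_inP => y yS.
have toU w : w \in S -> connect (adj_in e S) w u.
  move=> wS; case: (eqVneq w u) => [-> | wu]; first exact: connect0.
  apply: connect1; rewrite /adj_in /= wS uS esym /=.
  by move: (forall_inP uuniv w (subsetP sSU _ wS)); rewrite wu.
by apply: connect_trans (toU _ xS) _; rewrite csym // toU.
Qed.

End TP.

Lemma sum_ind (T : finType) (S K : {set T}) :
  \sum_(x in S) ((x \in K) : nat) = #|S :&: K|.
Proof.
transitivity (\sum_(x in S | x \in K) 1); first by rewrite big_mkcondr.
by rewrite -sum1_card; apply: eq_bigl => x; rewrite !inE.
Qed.

Theorem mainTheorem10 (R : realFieldType) :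
  (forall (T : finType) (e : rel T), symmetric e -> irreflexive e ->
     block_graph e -> hereditarily_connected_domishold e R) /\
  (forall (T : finType) (e : rel T), symmetric e -> irreflexive e ->
     trivially_perfect e -> hereditarily_connected_domishold e R).
Proof.
split.
  move=> T e esym eirr bg U cU.
  have Q := block_Q esym eirr bg.
  pose K := [set c | cut_vertex_in e U c].
  pose N := #|T|.
  apply: (@thr _ _ R U (fun x => N * (x \in K) + 1) (N * #|K| + 1)) => //.
  move=> S sSU; rewrite (Q_cds esym eirr Q cU sSU) -/K.
  rewrite big_split /= sum1_card -big_distrr /= sum_ind.
  have h1 : #|S :&: K| <= #|K| by apply: subset_leq_card; apply: subsetIr.
  have h2 : #|S| <= N by apply: max_card.
  case: (boolP (K \subset S)) => KS /=.
    rewrite (setIidPr KS) -card_gt0; apply/idP/idP => /= h; lia.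
  have lt : #|S :&: K| < #|K|.
    apply: proper_card; apply/properP; split; first exact: subsetIr.
    have [x xK xS] := subsetPn KS; exists x => //.
    by rewrite inE (negbTE xS).
  symmetry; apply/negbTE; rewrite -ltnNge.
  have := leq_mul (leqnn N) lt; rewrite mulnS.
  lia.
move=> T e esym eirr tp U.
apply: (@thr _ _ R U (fun x => (x \in [set u in U | univ e U u]) : nat) 1) => S sSU.
by rewrite (TP_cds esym eirr tp sSU) sum_ind card_gt0.
Qed.
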